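(* Assume $\mathrm{SRP}(\omega_2)$. Then the nonstationary ideal $\mathrm{NS}_{\omega_1}$ on $\omega_1$ is saturated, i.e. $\mathcal P(\omega_1)/\mathrm{NS}_{\omega_1}$ has the $\omega_2$-chain condition: every family of stationary subsets of $\omega_1$ whose pairwise intersections are nonstationary has cardinality at most $\omega_1$.
   Context: For an uncountable set $Z$, a club on $[Z]^\omega$ is a set of the form $\{Y\in[Z]^\omega: g[Y^{<\omega}]\subseteq Y\}$ for some $g:Z^{<\omega}\to Z$, and a set is stationary iff it meets every club. $S\subseteq[X]^\omega$ is projectively stationary iff $\omega_1\subseteq X$, $S$ is stationary, and $\{A\cap\omega_1:A\in S\}$ contains a club on $[\omega_1]^\omega$. $\mathrm{SRP}(X)$: every projectively stationary $S\subseteq[X]^\omega$ strongly reflects on some $Z$ with $\omega_1\subseteq Z\subseteq X$, $|Z|=\omega_1$, i.e. $S\cap[Z]^\omega$ contains a club on $[Z]^\omega$. *)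

(* Defs.v *)
(* Set theory is modelled over a type W carrying a strict
   well-order lt of order type omega_2 (see Omega2Order below).  Subsets of W
   are predicates W -> Prop; sets of subsets are predicates on those, always
   read up to extensional equality. *)
From Stdlib Require Import List.
Import ListNotations.

Section SetTheory.
Variable W : Type.
Variable lt : W -> W -> Prop.

(* omega_1 as a subset of W: the points with countable initial segment. *)
Definition om1 (x : W) : Prop :=
  exists f : nat -> W, forall y, lt y x -> exists n, f n = y.

(* W with lt is a well-order of order type omega_2: strict total well-order,
   every proper initial segment has size <= aleph_1 (injects into om1),
   and W itself does not inject into om1. *)
Definition Omega2Order : Prop :=
  (forall x, ~ lt x x) /\
  (forall x y z, lt x y -> lt y z -> lt x z) /\
  (forall x y, lt x y \/ x = y \/ lt y x) /\
  well_founded lt /\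
  (forall x, exists f : W -> W,
      (forall y, lt y x -> om1 (f y)) /\
      (forall y z, lt y x -> lt z x -> f y = f z -> y = z)) /\
  ~ (exists f : W -> W, (forall y, om1 (f y)) /\
                        (forall y z, f y = f z -> y = z)).

Definition ctbl_inf (Y : W -> Prop) : Prop :=
  exists f : nat -> W,
    (forall n, Y (f n)) /\ (forall n m, f n = f m -> n = m) /\
    (forall x, Y x -> exists n, f n = x).

Definition subset (A B : W -> Prop) : Prop := forall x, A x -> B x.
Definition seteq (A B : W -> Prop) : Prop := forall x, A x <-> B x.

Definition inS (S : (W -> Prop) -> Prop) (Y : W -> Prop) : Prop :=
  exists A, S A /\ seteq A Y.

Definition fun_into (Z : W -> Prop) (g : list W -> W) : Prop :=
  forall l, Forall Z l -> Z (g l).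

Definition in_club (Z : W -> Prop) (g : list W -> W) (Y : W -> Prop) : Prop :=
  ctbl_inf Y /\ subset Y Z /\ (forall l, Forall Y l -> Y (g l)).

Definition stationary_in (X : W -> Prop) (S : (W -> Prop) -> Prop) : Prop :=
  forall g, fun_into X g -> exists Y, in_club X g Y /\ inS S Y.

Definition proj_stationary (S : (W -> Prop) -> Prop) : Prop :=
  stationary_in (fun _ => True) S /\
  exists g, fun_into om1 g /\
    forall B, in_club om1 g B ->
      exists A, S A /\ seteq (fun x => A x /\ om1 x) B.

Definition card_om1 (Z : W -> Prop) : Prop :=
  exists f : W -> W,
    (forall x, Z x -> om1 (f x)) /\
    (forall x y, Z x -> Z y -> f x = f y -> x = y) /\
    (forall z, om1 z -> exists x, Z x /\ f x = z).

Definition SRP : Prop :=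
  forall S : (W -> Prop) -> Prop,
    (forall A, S A -> ctbl_inf A) ->
    proj_stationary S ->
    exists Z : W -> Prop,
      subset om1 Z /\ card_om1 Z /\
      exists g, fun_into Z g /\ forall Y, in_club Z g Y -> inS S Y.

Definition club1 (C : W -> Prop) : Prop :=
  subset C om1 /\
  (forall x, om1 x -> exists y, C y /\ lt x y) /\
  (forall x, om1 x -> (exists y, lt y x) ->
     (forall y, lt y x -> exists z, C z /\ lt y z /\ lt z x) -> C x).

Definition stationary1 (A : W -> Prop) : Prop :=
  forall C, club1 C -> exists x, A x /\ C x.

Definition NS_saturated : Prop :=
  forall F : (W -> Prop) -> Prop,
    (forall A, F A -> subset A om1) ->
    (forall A, F A -> stationary1 A) ->
    (forall A B, F A -> F B -> ~ seteq A B ->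
       ~ stationary1 (fun x => A x /\ B x)) ->
    exists f : (W -> Prop) -> W,
      (forall A, F A -> om1 (f A)) /\
      (forall A B, F A -> F B -> f A = f B -> seteq A B).

End SetTheory.

(* Main.v *)
Require Import Defs.
From Stdlib Require Import List Arith Lia Classical ClassicalEpsilon FunctionalExtensionality Cantor.
Import ListNotations.

Definition choiceP {A : Type} (d : A) (P : A -> Prop) : A :=
  match excluded_middle_informative (exists a, P a) with
  | left e => proj1_sig (constructive_indefinite_description P e)
  | right _ => d end.

Lemma choiceP_spec {A : Type} (d : A) (P : A -> Prop) :
  (exists a, P a) -> P (choiceP d P).
Proof.
  intro e. unfold choiceP. destruct (excluded_middle_informative _) as [e'|n].
  - exact (proj2_sig (constructive_indefinite_description P e')).
  - contradiction.
Qed.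

Definition ctbl {W : Type} (P : W -> Prop) : Prop :=
  exists s : nat -> W, forall x, P x -> exists n, s n = x.

Lemma least_el {W : Type} (lt : W -> W -> Prop) (Hwf : well_founded lt)
  (P : W -> Prop) : (exists x, P x) -> exists x, P x /\ forall y, lt y x -> ~ P y.
Proof.
  intros [x Hx]. apply NNPP; intro Hn.
  assert (forall z, ~ P z).
  { intro z. induction z as [z IH] using (well_founded_ind Hwf).
    intro Pz. apply Hn. exists z. split; auto. }
  eapply H; eauto.
Qed.

Lemma ctbl_union {W : Type} (P : nat -> W -> Prop) :
  (forall n, ctbl (P n)) -> ctbl (fun x => exists n, P n x).
Proof.
  intro H. destruct (choice (fun (n:nat) (s : nat -> W) => forall x, P n x -> exists k, s k = x) H)
    as [S HS].
  exists (fun k => let (a, b) := of_nat k in S a b).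
  intros x [n Hn]. destruct (HS n x Hn) as [k Hk].
  exists (to_nat (n, k)). rewrite cancel_of_to. exact Hk.
Qed.

Lemma ctbl_sub {W : Type} (P Q : W -> Prop) : ctbl Q -> (forall x, P x -> Q x) -> ctbl P.
Proof. intros [s Hs] H. exists s. intros x Px. apply Hs, H, Px. Qed.

Lemma ctbl_or {W : Type} (P Q : W -> Prop) : ctbl P -> ctbl Q -> ctbl (fun x => P x \/ Q x).
Proof.
  intros HP HQ.
  apply ctbl_sub with (Q := fun x => exists n : nat, (match n with 0 => P | _ => Q end) x).
  - apply ctbl_union. intros [|]; auto.
  - intros x [H|H]; [exists 0|exists 1]; auto.
Qed.

Lemma ctbl_single {W : Type} (a : W) : ctbl (fun x => x = a).
Proof. exists (fun _ => a). intros x ->. exists 0. auto. Qed.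

Lemma ctbl_empty {W : Type} (a : W) (P : W -> Prop) : (forall x, ~ P x) -> ctbl P.
Proof. intro H. exists (fun _ => a). intros x Px. exfalso; eapply H; eauto. Qed.

Lemma om1_down (W : Type) (lt : W -> W -> Prop) :
  (forall x y z, lt x y -> lt y z -> lt x z) ->
  forall x y, om1 W lt x -> lt y x -> om1 W lt y.
Proof.
  intros Htr x y [f Hf] Hyx. exists f. intros z Hz. apply Hf. eauto.
Qed.

Lemma W_not_ctbl (W : Type) (lt : W -> W -> Prop) :
  Omega2Order W lt -> ~ ctbl (fun _ : W => True).
Proof.
  intros (Hirr & Htr & Htot & Hwf & Hseg & Hbig) [s Hs].
  apply Hbig. exists (fun y => y). split; auto.
  intro y. exists s. intros z _. apply Hs; auto.
Qed.

Lemma W_inh (W : Type) (lt : W -> W -> Prop) :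
  Omega2Order W lt -> exists z : W, True.
Proof.
  intros (Hirr & Htr & Htot & Hwf & Hseg & Hbig).
  apply NNPP; intro Hn. apply Hbig. exists (fun y => y). split; auto.
  intro y. exfalso. apply Hn. exists y; auto.
Qed.

Lemma exists_not_om1 (W : Type) (lt : W -> W -> Prop) :
  Omega2Order W lt -> exists z, ~ om1 W lt z.
Proof.
  intros HO. pose proof HO as (Hirr & Htr & Htot & Hwf & Hseg & Hbig).
  apply NNPP; intro Hn. apply Hbig. exists (fun y => y). split; auto.
  intro y. apply NNPP. intro H. apply Hn. eauto.
Qed.

Lemma zero_om1 (W : Type) (lt : W -> W -> Prop) :
  Omega2Order W lt -> exists z, om1 W lt z /\ forall y, ~ lt y z.
Proof.
  intros HO. pose proof HO as (Hirr & Htr & Htot & Hwf & Hseg & Hbig).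
  destruct (W_inh W lt HO) as [w _].
  destruct (least_el lt Hwf (fun _ => True)) as [z [_ Hz]]. exists w; auto.
  exists z. split.
  - exists (fun _ => z). intros y Hy. exfalso. eapply Hz; eauto.
  - intros y Hy. eapply Hz; eauto.
Qed.

Lemma bounded (W : Type) (lt : W -> W -> Prop) :
  Omega2Order W lt -> forall P : W -> Prop, ctbl P -> (forall x, P x -> om1 W lt x) ->
  exists y, om1 W lt y /\ forall x, P x -> lt x y.
Proof.
  intros HO P [s Hs] HP. pose proof HO as (Hirr & Htr & Htot & Hwf & Hseg & Hbig).
  set (Q := fun x => exists n, om1 W lt (s n) /\ (x = s n \/ lt x (s n))).
  assert (HQ : ctbl Q).
  { apply ctbl_sub with (Q := fun x => exists n, (fun n x => om1 W lt (s n) /\ (x = s n \/ lt x (s n))) n x).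
    - apply ctbl_union. intro n. destruct (classic (om1 W lt (s n))) as [Ho|Hno].
      + apply ctbl_sub with (Q := fun x => x = s n \/ lt x (s n)).
        * apply ctbl_or. apply ctbl_single. exact Ho.
        * intros x [_ H]; exact H.
      + apply (ctbl_empty (s n)). intros x [H _]; contradiction.
    - intros x H; exact H. }
  assert (Hex : exists y, ~ Q y).
  { apply NNPP; intro Hn. apply (W_not_ctbl W lt HO).
    apply ctbl_sub with (Q := Q); auto. intros x _. apply NNPP; intro; apply Hn; eauto. }
  destruct (least_el lt Hwf (fun y => ~ Q y) Hex) as [y [Hy Hmin]].
  exists y. split.
  - destruct HQ as [t Ht]. exists t. intros z Hz. apply Ht. apply NNPP. intro. eapply Hmin; eauto.
  - intros x Px. destruct (Hs x Px) as [n <-].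
    destruct (Htot (s n) y) as [H|[H|H]]; auto.
    + exfalso. apply Hy. exists n. split; auto.
    + exfalso. apply Hy. exists n. split; auto.
Qed.

Definition mex {W : Type} (lt : W -> W -> Prop) (X : W -> Prop) (m : W) : Prop :=
  ~ X m /\ forall v, lt v m -> X v.

Lemma mex_unique (W : Type) (lt : W -> W -> Prop) :
  (forall x y, lt x y \/ x = y \/ lt y x) ->
  forall X m m', mex lt X m -> mex lt X m' -> m = m'.
Proof.
  intros Htot X m m' [H1 H2] [H1' H2'].
  destruct (Htot m m') as [H|[H|H]]; auto.
  - exfalso; apply H1; auto.
  - exfalso; apply H1'; auto.
Qed.

Lemma mex_exists (W : Type) (lt : W -> W -> Prop) :
  Omega2Order W lt -> forall X, ctbl X -> exists m, mex lt X m /\ om1 W lt m.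
Proof.
  intros HO X HX. pose proof HO as (Hirr & Htr & Htot & Hwf & Hseg & Hbig).
  assert (Hex : exists y, ~ X y).
  { apply NNPP; intro Hn. apply (W_not_ctbl W lt HO).
    apply ctbl_sub with (Q := X); auto. intros x _. apply NNPP; intro; apply Hn; eauto. }
  destruct (least_el lt Hwf _ Hex) as [m [Hm Hmin]].
  exists m. split. split; auto.
  - intros v Hv. apply NNPP; intro; eapply Hmin; eauto.
  - destruct HX as [t Ht]. exists t. intros z Hz. apply Ht. apply NNPP; intro; eapply Hmin; eauto.
Qed.

Definition mexf {W : Type} (lt : W -> W -> Prop) (w0 : W) (X : W -> Prop) : W :=
  choiceP w0 (mex lt X).

Lemma mexf_spec (W : Type) (lt : W -> W -> Prop) :
  (forall x y, lt x y \/ x = y \/ lt y x) ->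
  forall w0 X m, mex lt X m -> mexf lt w0 X = m.
Proof.
  intros Htot w0 X m Hm. unfold mexf. eapply mex_unique; eauto.
  apply choiceP_spec. eauto.
Qed.

Lemma mexf_ext (W : Type) (lt : W -> W -> Prop) :
  (forall x y, lt x y \/ x = y \/ lt y x) ->
  forall w0 X Y, seteq W X Y -> mexf lt w0 X = mexf lt w0 Y.
Proof.
  intros Htot w0 X Y HXY.
  assert (E : forall m, mex lt X m <-> mex lt Y m).
  { intro m; unfold mex; split; intros [H1 H2]; split.
    - rewrite <- (HXY m); auto.
    - intros; apply HXY; auto.
    - rewrite (HXY m); auto.
    - intros; apply HXY; auto. }
  destruct (classic (exists m, mex lt X m)) as [[m Hm]|Hn].
  - rewrite (mexf_spec W lt Htot w0 X m Hm). symmetry. apply mexf_spec; auto. apply E; auto.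
  - unfold mexf, choiceP.
    destruct (excluded_middle_informative (exists a, mex lt X a)) as [e|].
    + contradiction.
    + destruct (excluded_middle_informative (exists a, mex lt Y a)) as [[a Ha]|]; auto.
      exfalso; apply Hn; exists a; apply E; auto.
Qed.

Definition closedG {W : Type} (G : nat -> list W -> W) (P : W -> Prop) : Prop :=
  forall i l, Forall P l -> P (G i l).

Definition hull {W : Type} (G : nat -> list W -> W) (Y : W -> Prop) (x : W) : Prop :=
  forall P : W -> Prop, (forall y, Y y -> P y) -> closedG G P -> P x.

Lemma hull_seed {W} G (Y : W -> Prop) y : Y y -> hull G Y y.
Proof. intros Hy P HP _. auto. Qed.

Lemma hull_closed {W} G (Y : W -> Prop) : closedG G (hull G Y).
Proof.
  intros i l Hl P HY HP. apply HP.
  induction Hl as [|a l Ha Hl IH]; constructor; auto. apply Ha; auto.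
Qed.

Lemma hull_min {W} G (Y P : W -> Prop) :
  (forall y, Y y -> P y) -> closedG G P -> forall x, hull G Y x -> P x.
Proof. intros H1 H2 x Hx. apply Hx; auto. Qed.

Lemma hull_mono {W} G (Y Y' : W -> Prop) :
  (forall y, Y y -> Y' y) -> forall x, hull G Y x -> hull G Y' x.
Proof.
  intros H. apply hull_min. intros y Hy; apply hull_seed; auto. apply hull_closed.
Qed.

Lemma hull_directed {W I : Type} G (Yi : I -> W -> Prop) (i0 : I) :
  (forall i j, exists k, (forall x, Yi i x -> Yi k x) /\ (forall x, Yi j x -> Yi k x)) ->
  forall x, hull G (fun x => exists i, Yi i x) x -> exists i, hull G (Yi i) x.
Proof.
  intros Hd. apply hull_min.
  - intros y [i Hi]. exists i. apply hull_seed; auto.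
  - intros n l Hl.
    assert (exists k, Forall (hull G (Yi k)) l) as [k Hk].
    { induction Hl as [|a l [i Ha] Hl IH].
      - exists i0. constructor.
      - destruct IH as [j Hj]. destruct (Hd i j) as [k [Hik Hjk]].
        exists k. constructor.
        + apply (hull_mono G (Yi i)); auto.
        + eapply Forall_impl; [|exact Hj]. intros b. apply hull_mono; auto. }
    exists k. apply hull_closed; auto.
Qed.

Fixpoint lists_upto {W} (n : nat) (L : list W) : list (list W) :=
  match n with
  | 0 => [nil]
  | S n => nil :: flat_map (fun x => map (cons x) (lists_upto n L)) L
  end.

Lemma lists_upto_spec {W} (L : list W) : forall n l, length l <= n ->
  Forall (fun x => In x L) l -> In l (lists_upto n L).
Proof.
  induction n; intros l Hlen Hl.
  - destruct l; simpl in *; [auto|lia].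
  - destruct l as [|a l]; simpl; [auto|]. right.
    inversion Hl; subst. apply in_flat_map. exists a. split; auto.
    apply in_map. apply IHn; auto. simpl in Hlen; lia.
Qed.

Fixpoint Elist {W} (G : nat -> list W -> W) (s : nat -> W) (k : nat) : list W :=
  match k with
  | 0 => nil
  | S k => Elist G s k ++ (s k :: flat_map (fun i => map (G i) (lists_upto k (Elist G s k))) (seq 0 k))
  end.

Lemma Elist_prefix {W} G (s : nat -> W) : forall k m, exists t, Elist G s (k + m) = Elist G s k ++ t.
Proof.
  intros k m. induction m.
  - exists nil. rewrite Nat.add_0_r, app_nil_r. auto.
  - destruct IHm as [t Ht]. rewrite Nat.add_succ_r. simpl. rewrite Ht.
    eexists. rewrite <- app_assoc. reflexivity.
Qed.

Lemma Elist_len {W} G (s : nat -> W) : forall k, k <= length (Elist G s k).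
Proof.
  induction k; simpl; auto. rewrite length_app. simpl. lia.
Qed.

Lemma Elist_mono {W} G (s : nat -> W) : forall k k' x, k <= k' -> In x (Elist G s k) -> In x (Elist G s k').
Proof.
  intros k k' x Hk Hx. replace k' with (k + (k' - k)) by lia.
  destruct (Elist_prefix G s k (k' - k)) as [t ->]. apply in_or_app; auto.
Qed.

Lemma hull_ctbl {W} G (Y : W -> Prop) : ctbl Y -> ctbl (hull G Y).
Proof.
  intros [s Hs].
  set (E := Elist G s).
  exists (fun n => nth n (E (S n)) (s 0)).
  assert (Hcov : forall x k, In x (E k) -> exists n, nth n (E (S n)) (s 0) = x).
  { intros x k Hx. destruct (In_nth _ _ (s 0) Hx) as [j [Hj Hjx]].
    exists j. destruct (le_lt_dec k (S j)) as [Hkj|Hkj].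
    - replace (S j) with (k + (S j - k)) by lia.
      destruct (Elist_prefix G s k (S j - k)) as [t Ht]. unfold E. rewrite Ht.
      rewrite app_nth1; auto.
    - assert (Hl := Elist_len G s (S j)).
      replace k with (S j + (k - S j)) in Hjx by lia.
      destruct (Elist_prefix G s (S j) (k - S j)) as [t Ht]. unfold E in Hjx. rewrite Ht in Hjx.
      rewrite app_nth1 in Hjx; auto; lia. }
  intros x Hx. destruct (Hx (fun x => exists k, In x (E k))) as [k Hk].
  - intros y Hy. destruct (Hs y Hy) as [n <-]. exists (S n). simpl.
    apply in_or_app. right. left. auto.
  - intros i l Hl.
    assert (exists K, Forall (fun x => In x (E K)) l) as [K HK].
    { induction Hl as [|a l [k Ha] Hl IH].
      - exists 0. constructor.
      - destruct IH as [K HK]. exists (max k K). constructor.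
        + eapply Elist_mono; [|exact Ha]. lia.
        + eapply Forall_impl; [|exact HK]. intros b. apply Elist_mono. lia. }
    set (k' := max K (max (S i) (length l))).
    exists (S k'). simpl. apply in_or_app. right. right.
    apply in_flat_map. exists i. split.
    + apply in_seq. lia.
    + apply in_map. apply lists_upto_spec. lia.
      eapply Forall_impl; [|exact HK]. intros b. apply Elist_mono. lia.
  - eapply Hcov; eauto.
Qed.

Definition inf {W : Type} (P : W -> Prop) : Prop :=
  forall l : list W, exists x, P x /\ ~ In x l.

Lemma nat_least (Q : nat -> Prop) : (exists k, Q k) -> exists k, Q k /\ forall j, j < k -> ~ Q j.
Proof.
  intros H. apply (least_el Nat.lt lt_wf Q H).
Qed.

Lemma ctbl_inf_of {W : Type} (P : W -> Prop) : ctbl P -> inf P -> ctbl_inf W P.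
Proof.
  intros [s Hs] Hinf.
  set (Q := fun (l : list W) (k : nat) => P (s k) /\ ~ In (s k) l).
  assert (HQ : forall l, exists k, Q l k /\ forall j, j < k -> ~ Q l j).
  { intro l. apply nat_least. destruct (Hinf l) as [x [Px Hx]].
    destruct (Hs x Px) as [k <-]. exists k. split; auto. }
  set (idx := fun l => choiceP 0 (fun k => Q l k /\ forall j, j < k -> ~ Q l j)).
  assert (Hidx : forall l, Q l (idx l) /\ forall j, j < idx l -> ~ Q l j).
  { intro l. apply choiceP_spec. apply HQ. }
  set (pick := fun l => s (idx l)).
  set (pre := fix pre n := match n with 0 => nil | S n => pre n ++ [pick (pre n)] end).
  assert (Hpre_mono : forall n m x, n <= m -> In x (pre n) -> In x (pre m)).
  { intros n m x Hnm. induction Hnm; auto. intro H. simpl. apply in_or_app; auto. }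
  assert (Hin : forall n m, n < m -> In (pick (pre n)) (pre m)).
  { intros n m Hnm. apply (Hpre_mono (S n)); [lia|]. simpl. apply in_or_app. right. left. auto. }
  exists (fun n => pick (pre n)). split; [|split].
  - intro n. apply (Hidx (pre n)).
  - intros n m E. destruct (Nat.lt_trichotomy n m) as [H|[H|H]]; auto.
    + exfalso. apply (proj2 (proj1 (Hidx (pre m)))). fold (pick (pre m)). rewrite <- E. auto.
    + exfalso. apply (proj2 (proj1 (Hidx (pre n)))). fold (pick (pre n)). rewrite E. auto.
  - intros x Px. destruct (Hs x Px) as [k <-].
    apply NNPP; intro Hn.
    assert (Hnot : forall n, ~ In (s k) (pre n)).
    { intros n Hk. induction n; simpl in Hk; [auto|].
      apply in_app_or in Hk. destruct Hk as [Hk|[Hk|[]]]; auto. apply Hn. exists n; auto. }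
    (* idx (pre n) is strictly increasing and bounded by k *)
    assert (Hle : forall n, idx (pre n) <= k).
    { intro n. destruct (le_lt_dec (idx (pre n)) k); auto.
      exfalso. apply (proj2 (Hidx (pre n)) k); auto. split; auto. }
    assert (Hinc : forall n, n <= idx (pre n)).
    { induction n; [lia|].
      assert (idx (pre n) <= idx (pre (S n))).
      { destruct (le_lt_dec (idx (pre n)) (idx (pre (S n)))); auto. exfalso.
        apply (proj2 (Hidx (pre n)) (idx (pre (S n)))); auto.
        destruct (proj1 (Hidx (pre (S n)))) as [H1 H2]. split; auto.
        intro; apply H2. apply (Hpre_mono n); auto. }
      assert (idx (pre n) <> idx (pre (S n))).
      { intro E. destruct (proj1 (Hidx (pre (S n)))) as [_ H2]. apply H2.
        rewrite <- E. fold (pick (pre n)). apply Hin. lia. }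
      lia. }
    specialize (Hle (S k)). specialize (Hinc (S k)). lia.
Qed.

Lemma inj_avoid {W : Type} (d : nat -> W) : (forall n m, d n = d m -> n = m) ->
  forall l N, exists n, N <= n /\ ~ In (d n) l.
Proof.
  intros Hd l. induction l as [|a l IH]; intro N.
  - exists N. split; auto.
  - destruct (IH N) as [n [Hn1 Hn2]].
    destruct (classic (d n = a)) as [E|E].
    + destruct (IH (S n)) as [m [Hm1 Hm2]]. exists m. split; [lia|].
      intros [H|H]; auto. subst a. apply Hd in H. lia.
    + exists n. split; auto. intros [H|H]; auto.
Qed.

Lemma ctbl_inf_ctbl {W : Type} (P : W -> Prop) : ctbl_inf W P -> ctbl P.
Proof. intros [f [_ [_ H]]]. exists f. auto. Qed.

Lemma ctbl_inf_inf {W : Type} (P : W -> Prop) : ctbl_inf W P -> inf P.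
Proof.
  intros [f [H1 [H2 _]]] l. destruct (inj_avoid f H2 l 0) as [n [_ Hn]]. eauto.
Qed.

Lemma ctbl_inf_add {W : Type} (P : W -> Prop) a : ctbl_inf W P -> ctbl_inf W (fun x => P x \/ x = a).
Proof.
  intro H. apply ctbl_inf_of.
  - apply ctbl_or. apply ctbl_inf_ctbl; auto. apply ctbl_single.
  - intro l. destruct (ctbl_inf_inf P H l) as [x [Hx1 Hx2]]. eauto.
Qed.

Definition seedY {W : Type} (lt : W -> W -> Prop) (d xi : W) (x : W) : Prop := lt x d \/ x = xi.

Definition Kset {W : Type} (lt : W -> W -> Prop) (G : nat -> list W -> W) (xi d : W) : Prop :=
  om1 W lt d /\ inf (fun x => lt x d) /\
  forall z, hull G (seedY lt d xi) z -> om1 W lt z -> lt z d.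

Lemma seed_ctbl {W : Type} (lt : W -> W -> Prop) d xi : om1 W lt d -> ctbl (seedY lt d xi).
Proof. intro H. apply ctbl_or. exact H. apply ctbl_single. Qed.

Lemma hull_bounded (W : Type) (lt : W -> W -> Prop) (HO : Omega2Order W lt) G xi d :
  om1 W lt d -> exists y, om1 W lt y /\ lt d y /\
    forall z, hull G (seedY lt d xi) z -> om1 W lt z -> lt z y.
Proof.
  intro Hd.
  destruct (bounded W lt HO (fun z => z = d \/ (hull G (seedY lt d xi) z /\ om1 W lt z))) as [y [Hy1 Hy2]].
  - apply ctbl_or. apply ctbl_single. eapply ctbl_sub. apply hull_ctbl. apply seed_ctbl. exact Hd.
    intros x [H _]; exact H.
  - intros x [->|[_ H]]; auto.
  - exists y. split; auto.
Qed.

Lemma K_club (W : Type) (lt : W -> W -> Prop) (HO : Omega2Order W lt) G xi :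
  club1 W lt (Kset lt G xi).
Proof.
  pose proof HO as (Hirr & Htr & Htot & Hwf & Hseg & Hbig).
  split; [|split].
  - intros d [H _]; exact H.
  -
    intros x Hx.
    set (P := fun d y => om1 W lt y /\ lt d y /\
                forall z, hull G (seedY lt d xi) z -> om1 W lt z -> lt z y).
    set (next := fun d => choiceP d (P d)).
    assert (Hnext : forall d, om1 W lt d -> P d (next d)).
    { intros d Hd. apply choiceP_spec. apply hull_bounded; auto. }
    set (ds := fun n => Nat.iter n next x).
    assert (Hds : forall n, om1 W lt (ds n) /\ P (ds n) (ds (S n))).
    { induction n.
      - split; [auto|apply Hnext; auto].
      - destruct IHn as [_ H]. assert (om1 W lt (ds (S n))) by apply H. split; [auto|].
        apply Hnext; auto. }
    assert (Hinc : forall n m, n < m -> lt (ds n) (ds m)).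
    { intros n m Hnm. induction Hnm.
      - apply (proj1 (proj2 (proj2 (Hds n)))).
      - eapply Htr; eauto. apply (proj1 (proj2 (proj2 (Hds m)))). }
    assert (Hinj : forall n m, ds n = ds m -> n = m).
    { intros n m E. destruct (Nat.lt_trichotomy n m) as [H|[H|H]]; auto.
      - apply Hinc in H. rewrite E in H. exfalso; eapply Hirr; eauto.
      - apply Hinc in H. rewrite E in H. exfalso; eapply Hirr; eauto. }
    destruct (bounded W lt HO (fun z => exists n, ds n = z)) as [y0 [Hy0 Hy0']].
    + exists ds. auto.
    + intros z [n <-]. apply Hds.
    + destruct (least_el lt Hwf (fun y => forall n, lt (ds n) y)) as [D [HD HDmin]].
      { exists y0. intro n. apply Hy0'. eauto. }
      assert (HomD : om1 W lt D).
      { destruct (Htot D y0) as [H|[H|H]].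
        - eapply om1_down; eauto.
        - subst; auto.
        - exfalso. apply (HDmin y0 H). intro n. apply Hy0'; eauto. }
      assert (Hbelow : forall v, lt v D -> exists n, lt v (ds n)).
      { intros v Hv. apply NNPP; intro Hn. apply (HDmin v Hv). intro n.
        destruct (Htot (ds n) v) as [H|[H|H]]; auto.
        - exfalso. apply Hn. exists (S n). rewrite <- H. apply Hinc. lia.
        - exfalso. apply Hn. eauto. }
      exists D. split; [split; [|split]|].
      * exact HomD.
      * intro l. destruct (inj_avoid ds Hinj l 0) as [n [_ Hn]]. eauto.
      * intros z Hz Hzo.
        assert (Hz' : hull G (fun x => exists n, seedY lt (ds n) xi x) z).
        { revert Hz. apply hull_mono. intros v [Hv|Hv].
          - destruct (Hbelow v Hv) as [n Hn]. exists n. left; auto.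
          - exists 0. right; auto. }
        apply (hull_directed G (fun n => seedY lt (ds n) xi) 0) in Hz'.
        -- destruct Hz' as [n Hn]. eapply Htr. apply (proj2 (proj2 (proj2 (Hds n)))); auto.
           apply HD.
        -- intros i j. exists (max i j). unfold seedY.
           split; intros v [Hv|Hv]; try (right; exact Hv); left.
           ++ destruct (Nat.eq_dec i (max i j)) as [E|E]. rewrite <- E; auto.
              eapply Htr; eauto. apply Hinc. lia.
           ++ destruct (Nat.eq_dec j (max i j)) as [E|E]. rewrite <- E; auto.
              eapply Htr; eauto. apply Hinc. lia.
      * apply (HD 0).
  -
    intros d Hd [y Hy] Hcof.
    destruct (Hcof y Hy) as [z0 [Hz0 [_ Hz0d]]].
    split; [exact Hd|split].
    + intro l. destruct Hz0 as [_ [Hinf _]]. destruct (Hinf l) as [x [Hx1 Hx2]].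
      exists x. split; eauto.
    + intros z Hz Hzo.
      set (Yi := fun i x => (Kset lt G xi i /\ lt i d) /\ seedY lt i xi x).
      assert (Hz' : hull G (fun x => exists i, Yi i x) z).
      { revert Hz. apply hull_mono. intros v [Hv|Hv].
        - destruct (Hcof v Hv) as [w [Hw1 [Hw2 Hw3]]]. exists w. split; auto. left; auto.
        - exists z0. split; auto. right; auto. }
      apply (hull_directed G Yi d) in Hz'.
      * destruct Hz' as [i Hi].
        destruct (classic (Kset lt G xi i /\ lt i d)) as [Hg|Hb].
        -- eapply Htr; [|apply Hg]. apply (proj2 (proj2 (proj1 Hg))); auto.
           revert Hi. apply hull_mono. intros v [_ Hv]; auto.
        -- eapply Htr; [|exact Hz0d]. apply (proj2 (proj2 Hz0)); auto.
           revert Hi. apply hull_mono. intros v [Hv _]; contradiction.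
      * intros i j.
        destruct (classic (Kset lt G xi i /\ lt i d)) as [Hi|Hi];
        destruct (classic (Kset lt G xi j /\ lt j d)) as [Hj|Hj].
        -- destruct (Htot i j) as [H|[H|H]].
           ++ exists j. unfold Yi, seedY. split; intros v [_ [Hv|Hv]]; split; auto;
              first [right; assumption | left; eauto].
           ++ subst. exists j. split; auto.
           ++ exists i. unfold Yi, seedY. split; intros v [_ [Hv|Hv]]; split; auto;
              first [right; assumption | left; eauto].
        -- exists i. split; auto. intros v [Hv _]; contradiction.
        -- exists j. split; auto. intros v [Hv _]; contradiction.
        -- exists j. split; auto. intros v [Hv _]; contradiction.
Qed.

Lemma K_good (W : Type) (lt : W -> W -> Prop) (HO : Omega2Order W lt) (U : W -> Prop) G xi d :
  (forall x, om1 W lt x -> U x) -> U xi -> closedG G U -> Kset lt G xi d ->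
  let X := hull G (seedY lt d xi) in
  ctbl_inf W X /\ (forall x, X x -> U x) /\ X xi /\
  (forall x, om1 W lt x -> (X x <-> lt x d)) /\ mex lt X d.
Proof.
  pose proof HO as (Hirr & Htr & Htot & Hwf & Hseg & Hbig).
  intros HU Hxi HGU [Hd [Hinf Hb]] X.
  assert (Hseed : forall x, lt x d -> X x). { intros; apply hull_seed; left; auto. }
  split; [|split; [|split; [|split]]].
  - apply ctbl_inf_of. apply hull_ctbl, seed_ctbl; auto.
    intro l. destruct (Hinf l) as [x [H1 H2]]. eauto.
  - apply hull_min; auto. intros y [Hy| ->]; auto. apply HU. eapply om1_down; eauto.
  - apply hull_seed. right; auto.
  - intros x Hx. split; auto.
  - split; auto. intro H. apply (Hirr d). apply Hb; auto.
Qed.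

Lemma choiceP_def {A : Type} (d : A) (P : A -> Prop) : ~ (exists a, P a) -> choiceP d P = d.
Proof.
  intro H. unfold choiceP. destruct (excluded_middle_informative _); [contradiction|auto].
Qed.

Lemma contra (W : Type) (lt : W -> W -> Prop) (HO : Omega2Order W lt) (HSRP : SRP W lt)
  (fam : W -> W -> Prop) (Hst : forall xi, stationary1 W lt (fam xi))
  (Hns : forall xi eta, xi <> eta -> ~ stationary1 W lt (fun x => fam xi x /\ fam eta x)) : False.
Proof.
  pose proof HO as (Hirr & Htr & Htot & Hwf & Hseg & Hbig).
  destruct (zero_om1 W lt HO) as [z0 [Hz0o Hz0m]].
  set (m := mexf lt z0).
  set (S := fun A => ctbl_inf W A /\
     ((exists xi, A xi /\ ~ om1 W lt xi /\ fam xi (m A)) \/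
      (forall xi, ~ om1 W lt xi -> ~ fam xi (m A)))).
  destruct (HSRP S) as [Z [HZ1 [HZ2 [g [Hg Hcl]]]]].
  - intros A [H _]; exact H.
  - split.
    + intros g _. destruct (exists_not_om1 W lt HO) as [xi0 Hxi0].
      set (G := fun (_ : nat) (l : list W) => g l).
      destruct (Hst xi0 _ (K_club W lt HO G xi0)) as [d [Hfd HKd]].
      destruct (K_good W lt HO (fun _ => True) G xi0 d) as [Hci [_ [Hxi [_ Hmex]]]]; auto.
      { intros i l _; exact I. }
      exists (hull G (seedY lt d xi0)). split.
      * split; [exact Hci|split]. intros x _; exact I.
        intros l Hl. apply (hull_closed G _ 0 l Hl).
      * exists (hull G (seedY lt d xi0)). split; [|intro; tauto].
        split; [exact Hci|]. left. exists xi0. split; auto. split; auto.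
        unfold m. rewrite (mexf_spec W lt Htot z0 _ d Hmex). exact Hfd.
    + exists (fun _ => z0). split. { intros l _; exact Hz0o. }
      intros B [HB1 [HB2 HB3]].
      destruct (mex_exists W lt HO B (ctbl_inf_ctbl _ HB1)) as [d [Hd Hdo]].
      destruct (classic (exists xi, ~ om1 W lt xi /\ fam xi d)) as [[xi [Hxi1 Hxi2]]|Hn].
      * exists (fun x => B x \/ x = xi). split.
        -- split. apply ctbl_inf_add; auto. left. exists xi. split; [right; auto|split; auto].
           unfold m. rewrite (mexf_spec W lt Htot z0 _ d); auto. split.
           ++ intros [H|H]. apply (proj1 Hd); auto. subst; contradiction.
           ++ intros v Hv; left; apply Hd; auto.
        -- intro x; split.
           ++ intros [[H|H] Ho]; auto. subst; contradiction.
           ++ intro H; split; [left; auto| apply HB2; auto].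
      * exists B. split.
        -- split; auto. right. unfold m. rewrite (mexf_spec W lt Htot z0 B d Hd).
           intros xi H1 H2; apply Hn; eauto.
        -- intro x; split; [intros [H _]; auto| intro; split; auto; apply HB2; auto].
  - destruct HZ2 as [cf [Hc1 [Hc2 Hc3]]].
    assert (Heta : exists eta, ~ Z eta).
    { apply NNPP; intro Hn. apply Hbig. exists cf. split.
      - intro y. apply Hc1. apply NNPP; intro; apply Hn; eauto.
      - intros y z E. apply Hc2; auto; apply NNPP; intro; apply Hn; eauto. }
    destruct Heta as [eta Heta].
    assert (Hetao : ~ om1 W lt eta) by (intro; apply Heta, HZ1; auto).
    set (Cf := fun xi => choiceP (fun _ => False)
       (fun C => club1 W lt C /\ forall x, C x -> ~ (fam xi x /\ fam eta x))).
    assert (HCf : forall xi, Z xi -> club1 W lt (Cf xi) /\ forall x, Cf xi x -> ~ (fam xi x /\ fam eta x)).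
    { intros xi Hxi. apply choiceP_spec.
      assert (xi <> eta) by (intro; subst; contradiction).
      specialize (Hns xi eta H). apply NNPP; intro Hn. apply Hns.
      intros C HC. apply NNPP; intro Hn2. apply Hn. exists C. split; auto.
      intros x Hx Hf. apply Hn2. exists x. tauto. }
    assert (HCfo : forall xi x, Cf xi x -> om1 W lt x).
    { intros xi x. unfold Cf, choiceP. destruct (excluded_middle_informative _) as [e|].
      - destruct (proj2_sig (constructive_indefinite_description _ e)) as [[H _] _]. apply H.
      - intros []. }
    set (nx := fun xi x => choiceP x (fun y => Cf xi y /\ lt x y)).
    set (G := fun i l => match i with 0 => g l | S _ =>
                match l with [a; b] => nx a b | _ => g l end end).
    assert (HGZ : closedG G Z).
    { intros i l Hl. destruct i as [|i]; simpl; [apply Hg; auto|].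
      destruct l as [|a [|b [|c l]]]; try (apply Hg; auto).
      inversion Hl; subst. inversion H2; subst.
      destruct (classic (exists y, Cf a y /\ lt b y)) as [Hex|Hnex].
      - apply HZ1. apply (HCfo a). apply (choiceP_spec b _ Hex).
      - unfold nx. rewrite choiceP_def; auto. }
    destruct (Hst eta _ (K_club W lt HO G z0)) as [d [Hfd HKd]].
    destruct (K_good W lt HO Z G z0 d) as [Hci [HXZ [_ [HXo Hmex]]]]; auto.
    set (X := hull G (seedY lt d z0)) in *.
    destruct (Hcl X) as [A [HSA HAX]].
    { split; [exact Hci|split]. exact HXZ. intros l Hl. apply (hull_closed G _ 0 l Hl). }
    assert (HmA : m A = d).
    { unfold m. rewrite (mexf_ext W lt Htot z0 A X HAX). apply mexf_spec; auto. }
    destruct HSA as [_ [[xi [HAxi [Hxio Hfxi]]]|Hr]]; rewrite HmA in *.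
    + assert (HXxi : X xi) by (apply HAX; auto).
      destruct (HCf xi (HXZ xi HXxi)) as [Hclub Hdis].
      apply (Hdis d); auto.
      destruct HKd as [Hdo [Hinf _]].
      apply (proj2 (proj2 Hclub)); auto.
      { destruct (Hinf nil) as [y [Hy _]]. eauto. }
      intros y Hy.
      assert (Hyo : om1 W lt y) by (eapply om1_down; eauto).
      destruct (proj1 (proj2 Hclub) y Hyo) as [y' Hy'].
      pose proof (choiceP_spec y (fun z => Cf xi z /\ lt y z) (ex_intro _ y' Hy')) as [Hn1 Hn2].
      exists (nx xi y). split; [exact Hn1|split; [exact Hn2|]].
      apply (proj1 (HXo (nx xi y) (HCfo xi _ Hn1))).
      apply (hull_closed G _ 1 [xi; y]). constructor; auto. constructor; [|constructor].
      apply HXo; auto.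
    + apply (Hr eta Hetao Hfd).
Qed.

Theorem mainTheorem20 (W : Type) (lt : W -> W -> Prop) :
  Omega2Order W lt -> SRP W lt -> NS_saturated W lt.
Proof.
  intros HO HSRP F HF1 HF2 HF3.
  pose proof HO as (Hirr & Htr & Htot & Hwf & Hseg & Hbig).
  destruct (classic (exists f : (W -> Prop) -> W,
      (forall A, F A -> om1 W lt (f A)) /\
      (forall A B, F A -> F B -> f A = f B -> seteq W A B))) as [H|Hno]; [exact H|exfalso].
  set (body := fun (xi : W) (rec : forall eta, lt eta xi -> W -> Prop) =>
     choiceP (fun _ : W => False)
       (fun A => F A /\ forall eta (p : lt eta xi), ~ seteq W A (rec eta p))).
  set (fam := Fix Hwf (fun _ => W -> Prop) body).
  assert (Hfix : forall xi, fam xi = body xi (fun eta _ => fam eta)).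
  { intro xi. unfold fam. apply (Fix_eq Hwf (fun _ => W -> Prop) body).
    intros x f1 f2 Hf. unfold body.
    assert (E : f1 = f2).
    { apply functional_extensionality_dep; intro y.
      apply functional_extensionality_dep; intro p. apply Hf. }
    rewrite E. reflexivity. }
  assert (Hfam : forall xi, F (fam xi) /\ forall eta, lt eta xi -> ~ seteq W (fam xi) (fam eta)).
  { intro xi. rewrite Hfix. unfold body.
    assert (Hex : exists A, F A /\ forall eta (p : lt eta xi), ~ seteq W A (fam eta)).
    { apply NNPP; intro Hn. destruct (Hseg xi) as [inj [Hi1 Hi2]]. apply Hno.
      assert (HA : forall A, F A -> exists eta, lt eta xi /\ seteq W A (fam eta)).
      { intros A HA. apply NNPP; intro Hn2. apply Hn. exists A. split; auto.
        intros eta p Hs. apply Hn2. eauto. }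
      set (ch := fun A => choiceP xi (fun eta => lt eta xi /\ seteq W A (fam eta))).
      assert (Hch : forall A, F A -> lt (ch A) xi /\ seteq W A (fam (ch A))).
      { intros A HFA. apply choiceP_spec. auto. }
      exists (fun A => inj (ch A)). split.
      - intros A HFA. apply Hi1. apply (Hch A HFA).
      - intros A B HFA HFB E.
        destruct (Hch A HFA) as [Ha1 Ha2]. destruct (Hch B HFB) as [Hb1 Hb2].
        assert (E' : ch A = ch B) by (apply Hi2; auto).
        intro x. rewrite (Ha2 x), (Hb2 x), E'. tauto. }
    pose proof (choiceP_spec (fun _ : W => False) _ Hex) as [H1 H2].
    split; auto. }
  assert (Hdist : forall xi eta, xi <> eta -> ~ seteq W (fam xi) (fam eta)).
  { intros xi eta Hne Hs. destruct (Htot xi eta) as [H|[H|H]].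
    - apply (proj2 (Hfam eta) xi H). intro x. rewrite (Hs x). tauto.
    - contradiction.
    - apply (proj2 (Hfam xi) eta H Hs). }
  apply (contra W lt HO HSRP fam).
  - intro xi. apply HF2. apply Hfam.
  - intros xi eta Hne. apply HF3; [apply Hfam|apply Hfam|apply Hdist; auto].
Qed.
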